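(* Let $a\in\mathbb{R}$, $b>0$, $\mu\in\mathbb{R}$, $\lambda\in(0,1)$, $\gamma\in\mathbb{R}$ and $\Delta\in\mathbb{N}$, and consider the impulsive difference equation $$x_{n+1}=\begin{cases} f(x_n), & n\in\mathbb{N},\ n\notin\{i\Delta: i\in\mathbb{N}\},\\ f(x_n)+\gamma, & n=i\Delta \text{ for some } i\in\mathbb{N},\end{cases}$$ with $f(x)=(1-\lambda)x+\frac{a\lambda}{b}-\frac{\lambda\arctan(\mu x)}{b}$ and arbitrary initial value $x_1\in\mathbb{R}$. Then: (i) every solution $(x_n)_{n\in\mathbb{N}}$ is bounded on $\mathbb{N}$; (ii) let $A=\frac{|a|}{b}+\frac{\pi}{2b}$ and let $k_-<k_+$ be real numbers with $2A\le k_+-k_-$. If $\gamma$ satisfies $$(k_-+A)\bigl(1-(1-\lambda)^{\Delta}\bigr)\le\gamma\le (k_+-A)\bigl(1-(1-\lambda)^{\Delta}\bigr),$$ then the map $F(x)=f^{\Delta}(x)+\gamma$ maps $[k_-,k_+]$ into itself and has a fixed point $x_1^*\in[k_-,k_+]$; consequently the equation has a $\Delta$-periodic orbit (i.e. $x_{n+\Delta}=x_n$ for all $n\in\mathbb{N}$) starting from $x_1^*\in[k_-,k_+]$.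
   Context: $f^{\Delta}$ denotes the $\Delta$-fold composition of $f$. The solution of the impulsive equation satisfies $x_{i\Delta+1}=F^i(x_1)$ for all $i\in\mathbb{N}$, where $F=f^\Delta+\gamma$. This equation models a supply and demand (price expectation) model perturbed by a constant impulse $\gamma$ every $\Delta$ steps. *)

(* Defs.v *)
From Stdlib Require Import Reals Lra Lia.
Open Scope R_scope.

Definition fmap (a b mu lam : R) (x : R) : R :=
  (1 - lam) * x + a * lam / b - lam * atan (mu * x) / b.

Definition Fmap (a b mu lam gam : R) (Delta : nat) (x : R) : R :=
  Nat.iter Delta (fmap a b mu lam) x + gam.

(* x : nat -> R is a solution of the impulsive equation, indices n >= 1
   (N = {1,2,...}); the value x 1 is the (arbitrary) initial value. *)
Definition is_solution (a b mu lam gam : R) (Delta : nat) (x : nat -> R) : Prop :=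
  forall n : nat, (1 <= n)%nat ->
    ((exists i : nat, (1 <= i)%nat /\ n = (i * Delta)%nat) ->
        x (S n) = fmap a b mu lam (x n) + gam) /\
    (~ (exists i : nat, (1 <= i)%nat /\ n = (i * Delta)%nat) ->
        x (S n) = fmap a b mu lam (x n)).

(* Main.v *)
Require Import Defs.
From Stdlib Require Import Reals Lra Lia ClassicalEpsilon.
Open Scope R_scope.

Lemma fmap_bounds a b mu lam z : 0 < b -> 0 < lam ->
  let A := Rabs a / b + PI / (2 * b) in
  (1 - lam) * z - lam * A <= fmap a b mu lam z <= (1 - lam) * z + lam * A.
Proof.
  intros hb hl A.
  set (q := lam / b).
  assert (hq : 0 < q) by (unfold q; apply Rdiv_lt_0_compat; lra).
  assert (E1 : fmap a b mu lam z = (1 - lam) * z + q * (a - atan (mu * z)))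
    by (unfold fmap, q; field; lra).
  assert (E2 : lam * A = q * (Rabs a + PI / 2)) by (unfold A, q; field; lra).
  destruct (atan_bound (mu * z)).
  assert (-Rabs a <= a <= Rabs a) by (split; [apply Rabs_le_minus_a | apply RRle_abs]) ||
  (pose proof (Rabs_pos a); split; [ pose proof (Rle_abs (-a)); rewrite Rabs_Ropp in *; lra | apply Rle_abs]).
  rewrite E1, E2.
  split.
  - assert (q * (- (Rabs a + PI/2)) <= q * (a - atan (mu * z)))
      by (apply Rmult_le_compat_l; lra). lra.
  - assert (q * (a - atan (mu * z)) <= q * (Rabs a + PI/2))
      by (apply Rmult_le_compat_l; lra). lra.
Qed.

Lemma abs_inv x M : Rabs x <= M -> -M <= x <= M.
Proof. intros h. unfold Rabs in h. destruct (Rcase_abs x); lra. Qed.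

Lemma fmap_cont a b mu lam : continuity (fmap a b mu lam).
Proof.
  unfold fmap. intro x.
  apply continuity_pt_minus.
  - apply continuity_pt_plus.
    + apply continuity_pt_mult. apply continuity_pt_const; intros ?; reflexivity.
      apply derivable_continuous_pt, derivable_pt_id.
    + apply continuity_pt_const; intros ?; reflexivity.
  - unfold Rdiv. apply continuity_pt_mult.
    + apply continuity_pt_mult. apply continuity_pt_const; intros ?; reflexivity.
      apply (continuity_pt_comp (fun x => mu * x) atan).
      * apply continuity_pt_mult. apply continuity_pt_const; intros ?; reflexivity.
        apply derivable_continuous_pt, derivable_pt_id.
      * apply derivable_continuous_pt, derivable_pt_atan.
    + apply continuity_pt_const; intros ?; reflexivity.
Qed.

Lemma iter_cont a b mu lam k : continuity (fun y => Nat.iter k (fmap a b mu lam) y).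
Proof.
  induction k; simpl.
  - intro x. apply derivable_continuous_pt, derivable_pt_id.
  - intro x. apply (continuity_pt_comp (fun y => Nat.iter k (fmap a b mu lam) y)
                    (fmap a b mu lam)); auto. apply fmap_cont.
Qed.

Lemma iter_bounds a b mu lam y k : 0 < b -> 0 < lam -> lam < 1 ->
  let A := Rabs a / b + PI / (2 * b) in
  (1 - lam) ^ k * y - A * (1 - (1 - lam) ^ k) <= Nat.iter k (fmap a b mu lam) y
  <= (1 - lam) ^ k * y + A * (1 - (1 - lam) ^ k).
Proof.
  intros hb hl0 hl1 A. induction k; simpl.
  - lra.
  - destruct (fmap_bounds a b mu lam (Nat.iter k (fmap a b mu lam) y) hb hl0) as [h1 h2].
    fold A in h1, h2. destruct IHk as [i1 i2].
    assert (hc : 0 < 1 - lam) by lra.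
    assert ((1-lam) * ((1 - lam) ^ k * y - A * (1 - (1 - lam) ^ k)) <=
            (1-lam) * Nat.iter k (fmap a b mu lam) y) by (apply Rmult_le_compat_l; lra).
    assert ((1-lam) * Nat.iter k (fmap a b mu lam) y <=
            (1-lam) * ((1 - lam) ^ k * y + A * (1 - (1 - lam) ^ k))) by (apply Rmult_le_compat_l; lra).
    split; nra.
Qed.

Definition imp (Delta n : nat) := exists i : nat, (1 <= i)%nat /\ n = (i * Delta)%nat.

Lemma imp_shift Delta n : (1 <= Delta)%nat -> (1 <= n)%nat -> (imp Delta (n + Delta) <-> imp Delta n).
Proof.
  intros hD hn; unfold imp; split.
  - intros [i [hi e]]. destruct i as [|[|i]]; try lia.
    exists (S i); split; [lia|]. simpl in e. lia.
  - intros [i [hi e]]. exists (S i). split; [lia|]. simpl. lia.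
Qed.

Lemma sol_step a b mu lam gam Delta x n : is_solution a b mu lam gam Delta x -> (1 <= n)%nat ->
  x (S n) = fmap a b mu lam (x n) + (if excluded_middle_informative (imp Delta n) then gam else 0).
Proof.
  intros hs hn. destruct (hs n hn) as [h1 h2].
  destruct (excluded_middle_informative (imp Delta n)) as [i|i].
  - apply h1; exact i.
  - rewrite h2 by exact i. lra.
Qed.

Theorem theorem1 (a b mu lam gam : R) (Delta : nat)
  (hb : 0 < b) (hl0 : 0 < lam) (hl1 : lam < 1) (hD : (1 <= Delta)%nat) :
  (* (i) every solution is bounded on N *)
  (forall x : nat -> R, is_solution a b mu lam gam Delta x ->
     exists M : R, forall n : nat, (1 <= n)%nat -> Rabs (x n) <= M) /\
  (* (ii) *)
  (forall km kp : R,
     let A := Rabs a / b + PI / (2 * b) in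
     km < kp -> 2 * A <= kp - km ->
     (km + A) * (1 - (1 - lam) ^ Delta) <= gam ->
     gam <= (kp - A) * (1 - (1 - lam) ^ Delta) ->
     (forall y : R, km <= y <= kp ->
        km <= Fmap a b mu lam gam Delta y <= kp) /\
     exists xs : R, km <= xs <= kp /\
       Fmap a b mu lam gam Delta xs = xs /\
       forall x : nat -> R, is_solution a b mu lam gam Delta x -> x 1%nat = xs ->
         forall n : nat, (1 <= n)%nat -> x (n + Delta)%nat = x n).
Proof.
  split.
  - intros x hs.
    set (A := Rabs a / b + PI / (2 * b)).
    exists (Rmax (Rabs (x 1%nat)) (A + Rabs gam / lam)).
    intros n hn. induction n as [|n IH]; [lia|].
    destruct (Nat.eq_dec n 0) as [->|hn0]; [apply Rmax_l|].
    assert (IH' := IH ltac:(lia)).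
    set (M := Rmax (Rabs (x 1%nat)) (A + Rabs gam / lam)) in *.
    assert (hM : A + Rabs gam / lam <= M) by apply Rmax_r.
    rewrite (sol_step a b mu lam gam Delta x n hs) by lia.
    destruct (fmap_bounds a b mu lam (x n) hb hl0) as [f1 f2]. fold A in f1, f2.
    assert (hg : Rabs (if excluded_middle_informative (imp Delta n) then gam else 0) <= Rabs gam)
      by (destruct excluded_middle_informative; [lra| rewrite Rabs_R0; apply Rabs_pos]).
    assert (E : Rabs gam = lam * (Rabs gam / lam)) by (field; lra).
    apply abs_inv in IH'.
    apply abs_inv in hg.
    apply Rabs_le.
    assert ((1-lam) * x n <= (1-lam) * M) by (apply Rmult_le_compat_l; lra).
    assert ((1-lam) * (-M) <= (1-lam) * x n) by (apply Rmult_le_compat_l; lra).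
    assert (lam * (A + Rabs gam / lam) <= lam * M) by (apply Rmult_le_compat_l; lra).
    split; nra.
  - intros km kp A hk hA hg1 hg2.
    assert (range : forall y : R, km <= y <= kp -> km <= Fmap a b mu lam gam Delta y <= kp).
    { intros y hy. unfold Fmap.
      destruct (iter_bounds a b mu lam y Delta hb hl0 hl1) as [i1 i2]. fold A in i1, i2.
      assert (hp : 0 <= (1 - lam) ^ Delta) by (apply pow_le; lra).
      assert ((1 - lam) ^ Delta * km <= (1 - lam) ^ Delta * y) by (apply Rmult_le_compat_l; lra).
      assert ((1 - lam) ^ Delta * y <= (1 - lam) ^ Delta * kp) by (apply Rmult_le_compat_l; lra).
      split; nra. }
    split; [exact range|].
    destruct (IVT_cor (fun y => Fmap a b mu lam gam Delta y - y) km kp) as [xs [hxs hF]].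
    + intro y. unfold Fmap. apply continuity_pt_minus.
      apply continuity_pt_plus. apply iter_cont.
      apply continuity_pt_const; intros ?; reflexivity.
      apply derivable_continuous_pt, derivable_pt_id.
    + lra.
    + destruct (range km) as [r1 _]; [lra|]. destruct (range kp) as [_ r2]; [lra|].
      assert (0 <= Fmap a b mu lam gam Delta km - km) by lra.
      assert (Fmap a b mu lam gam Delta kp - kp <= 0) by lra.
      nra.
    + exists xs. split; [exact hxs|]. split; [lra|].
      intros x hs h1.
      assert (pre : forall k, (k < Delta)%nat -> x (1 + k)%nat = Nat.iter k (fmap a b mu lam) xs).
      { induction k as [|k IHk]; intros hk'; simpl.
        - exact h1.
        - rewrite (sol_step a b mu lam gam Delta x (S k) hs) by lia.
          destruct excluded_middle_informative as [[i [hi e]]|_].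
          + exfalso. destruct i; [lia|]. simpl in e. lia.
          + rewrite Rplus_0_r. f_equal. apply IHk. lia. }
      assert (base : x (1 + Delta)%nat = x 1%nat).
      { destruct Delta as [|d]; [lia|].
        replace (1 + S d)%nat with (S (1 + d)) by lia.
        rewrite (sol_step a b mu lam gam (S d) x (1 + d) hs) by lia.
        destruct excluded_middle_informative as [_|hn].
        - rewrite pre by lia. rewrite h1. assert (hF' : Fmap a b mu lam gam (S d) xs = xs) by (cbv beta in hF; lra). unfold Fmap in hF'. simpl in hF'. simpl. lra.
        - exfalso. apply hn. exists 1%nat. split; lia. }
      intros n hn. induction n as [|n IH]; [lia|].
      destruct (Nat.eq_dec n 0) as [->|hn0]; [exact base|].
      replace (S n + Delta)%nat with (S (n + Delta)) by lia.
      rewrite (sol_step a b mu lam gam Delta x (n + Delta) hs) by lia.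
      rewrite (sol_step a b mu lam gam Delta x n hs) by lia.
      rewrite IH by lia.
      destruct excluded_middle_informative as [i1|i1];
      destruct excluded_middle_informative as [i2|i2]; try reflexivity.
      * exfalso. apply i2. apply (imp_shift Delta n hD ltac:(lia)). exact i1.
      * exfalso. apply i1. apply (imp_shift Delta n hD ltac:(lia)). exact i2.
Qed.
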